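(* For all integers $k\geq 2$ and $w\geq 2$, there exists a finite poset $P$ of width $w$ that does not contain $\mathbf{k}+\mathbf{k}$ as an induced subposet, and an ordering of the elements of $P$ such that First-Fit, presented with the elements in this order, uses at least $(k-1)(w-1)$ chains.
   Context: The width of a poset is the maximum size of an antichain. $\mathbf{k}+\mathbf{k}$ denotes the poset consisting of two disjoint chains $A,B$ with $|A|=|B|=k$ in which every element of $A$ is incomparable with every element of $B$. The First-Fit algorithm receives the elements of $P$ one at a time in some order and puts each new element $v$ into the first chain of the current chain partition all of whose elements are comparable to $v$, opening a new chain at the end of the partition if there is none. *)

(* Defs.v *)
From mathcomp Require Import all_boot.
Set Implicit Arguments. Unset Strict Implicit. Unset Printing Implicit Defensive.

Section Posets.
Variable T : finType.
Variable le : rel T.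

Definition is_poset : Prop :=
  reflexive le /\ antisymmetric le /\ transitive le.

Definition comparable (x y : T) : bool := le x y || le y x.

Definition is_chain (A : {set T}) : bool :=
  [forall x in A, forall y in A, comparable x y].

Definition is_antichain (A : {set T}) : bool :=
  [forall x in A, forall y in A, (x != y) ==> ~~ comparable x y].

Definition width : nat := \max_(A : {set T} | is_antichain A) #|A|.

(* P contains k+k as an induced subposet: two k-element chains A, B
   with every element of A incomparable to every element of B
   (this forces A and B to be disjoint). *)
Definition contains_kk (k : nat) : Prop :=
  exists A B : {set T},
    [/\ #|A| = k, #|B| = k, is_chain A, is_chain B &
        forall a b, a \in A -> b \in B -> ~~ comparable a b].

Fixpoint ff_insert (C : seq (seq T)) (v : T) : seq (seq T) :=
  match C with
  | [::] => [:: [:: v]]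
  | c :: C' => if all (comparable v) c then (rcons c v) :: C'
               else c :: ff_insert C' v
  end.

Definition first_fit (s : seq T) : seq (seq T) := foldl ff_insert [::] s.

Definition ff_num_chains (s : seq T) : nat := size (first_fit s).

End Posets.

(* Main.v *)
Require Import Defs.
From mathcomp Require Import all_boot zify.
Set Implicit Arguments. Unset Strict Implicit. Unset Printing Implicit Defensive.

Section FF.
Variable T : finType.
Variable le : rel T.
Hypothesis le_refl : reflexive le.

Lemma ff_skip (S R : seq (seq T)) (v : T) : (forall c, c \in S -> ~~ all (Defs.comparable le v) c) ->
  ff_insert le (S ++ R) v = S ++ ff_insert le R v.
Proof.
elim: S => //= c S IH H.
rewrite (negbTE (H c (mem_head _ _))) IH // => c' Hc'.
by apply: H; rewrite inE Hc' orbT.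
Qed.

Definition ischain (c : seq T) := forall x y, x \in c -> y \in c -> Defs.comparable le x y.
Definition good (S : seq (seq T)) (c : seq T) :=
  forall c', c' \in S -> forall x, x \in c -> exists2 y, y \in c' & ~~ Defs.comparable le x y.

Lemma ff_class S c : ischain c -> good S c -> c != [::] ->
  foldl (ff_insert le) S c = rcons S c.
Proof.
move=> Hch Hg.
have skip x : x \in c -> forall c', c' \in S -> ~~ all (Defs.comparable le x) c'.
  move=> xc c' Hc'; have [y yc' ny] := Hg c' Hc' x xc.
  by apply/negP => /allP /(_ y yc'); rewrite (negbTE ny).
have gen : forall p q : seq T, {subset p <= c} -> {subset q <= c} -> p != [::] ->
  foldl (ff_insert le) (rcons S p) q = rcons S (p ++ q).
  move=> p q; elim: q p => [|x q IH] p Hp Hq Hp0 /=; first by rewrite cats0.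
  rewrite -cats1 ff_skip; last by apply: skip; apply: Hq; rewrite mem_head.
  rewrite /= ifT; last first.
    apply/allP => y /Hp yc; apply: Hch => //; apply: Hq; exact: mem_head.
  rewrite cats1 IH.
  - by rewrite cat_rcons.
  - by move=> z; rewrite mem_rcons inE => /orP [/eqP -> | /Hp //]; apply: Hq; rewrite mem_head.
  - by move=> z zq; apply: Hq; rewrite inE zq orbT.
  - by case: p Hp Hp0 => //= *; rewrite rcons_cons.
case: c Hch Hg skip gen => // x q Hch Hg skip gen _ /=.
have -> : ff_insert le S x = rcons S [:: x].
  by rewrite -[S]cats0 ff_skip ?cats0 ?cats1 //; apply: skip; rewrite mem_head.
rewrite gen //.
- by move=> z; rewrite inE => /eqP ->; rewrite mem_head.
- by move=> z zq; rewrite inE zq orbT.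
Qed.

Lemma ff_flatten (F : nat -> seq T) g :
  (forall j, j < g -> ischain (F j) /\ F j != [::]) ->
  (forall i j, i < j -> j < g -> good [:: F i] (F j)) ->
  foldl (ff_insert le) [::] (flatten (map F (iota 0 g))) = map F (iota 0 g).
Proof.
elim: g => [|g IH] H1 H2 //.
rewrite -addn1 iotaD add0n map_cat /= cats1 flatten_rcons foldl_cat IH; first last.
- by move=> i j ij jg; apply: H2 => //; rewrite ltnS ltnW.
- by move=> j jg; apply: H1; rewrite ltnS ltnW.
have [Hc Hn] := H1 g (ltnSn g).
apply: ff_class => // c' /mapP [i] /[!mem_iota] /andP [_ ig] -> x xc.
by have := H2 i g ig (ltnSn g) (F i) (mem_head _ _) x xc.
Qed.

Lemma size_ff_insert S v : size S <= size (ff_insert le S v).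
Proof. by elim: S => //= c S IH; case: ifP => //=; rewrite ltnS. Qed.

Lemma size_foldl S s : size S <= size (foldl (ff_insert le) S s).
Proof.
elim: s S => //= v s IH S; apply: leq_trans (size_ff_insert S v) (IH _).
Qed.

Lemma flatten_uniq (F : nat -> seq T) g :
  (forall j, j < g -> ischain (F j) /\ uniq (F j)) ->
  (forall i j, i < j -> j < g -> good [:: F i] (F j)) ->
  uniq (flatten (map F (iota 0 g))).
Proof.
elim: g => [|g IH] H1 H2 //.
rewrite -addn1 iotaD add0n map_cat /= cats1 flatten_rcons cat_uniq.
rewrite IH; first last.
- by move=> i j ij jg; apply: H2 => //; rewrite ltnS ltnW.
- by move=> j jg; apply: H1; rewrite ltnS ltnW.
have [Hc Hu] := H1 g (ltnSn g).
rewrite Hu andbT /=; apply/hasPn => x xg; apply/negP.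
move=> /flattenP [c /mapP [i] /[!mem_iota] /andP [_ ig] -> xi].
have [y yi ny] := H2 i g ig (ltnSn g) (F i) (mem_head _ _) x xg.
have [Hci _] := H1 i (ltnW ig).
by rewrite (Hci x y xi yi) in ny.
Qed.

End FF.

Section Con.
Variables (w d n : nat).
Hypothesis w2 : 2 <= w.
Hypothesis d1 : 1 <= d.

Definition lel : rel 'I_n := fun x y =>
  ((x %% w == y %% w) && (x %/ w <= y %/ w)) || (x %/ w + d <= y %/ w).

Lemma w0 : 0 < w. Proof. by apply: leq_trans w2. Qed.

Lemma val_eq (x y : 'I_n) : x %% w = y %% w -> x %/ w = y %/ w -> x = y.
Proof.
move=> h1 h2; apply: val_inj => /=.
by rewrite (divn_eq x w) (divn_eq y w) h1 h2.
Qed.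

Lemma lel_poset : is_poset lel.
Proof.
split; [|split].
- by move=> x; rewrite /lel eqxx leqnn.
- move=> x y /andP [h1 h2]; move: h1 h2; rewrite /lel.
  case/orP => [/andP [/eqP r1 p1]|p1]; case/orP => [/andP [_ p2]|p2].
  + by apply: val_eq => //; apply/eqP; rewrite eqn_leq p1 p2.
  + exfalso; lia.
  + exfalso; lia.
  + exfalso; lia.
- move=> y x z; rewrite /lel.
  case/orP => [/andP [/eqP r1 p1]|p1]; case/orP => [/andP [/eqP r2 p2]|p2].
  + by rewrite r1 r2 eqxx (leq_trans p1 p2).
  + apply/orP; right; lia.
  + apply/orP; right; lia.
  + apply/orP; right; lia.
Qed.

Lemma incomp (x y : 'I_n) : x %% w != y %% w -> x %/ w < y %/ w + d ->
  y %/ w < x %/ w + d -> ~~ Defs.comparable lel x y.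
Proof.
move=> r h1 h2; rewrite /Defs.comparable /lel (negbTE r) eq_sym (negbTE r) /=.
apply/norP; split; rewrite -ltnNge; lia.
Qed.

Lemma comp_far (x y : 'I_n) : x %/ w + d <= y %/ w -> Defs.comparable lel x y.
Proof. by move=> h; rewrite /Defs.comparable /lel h orbT. Qed.

Lemma comp_samepos (x y : 'I_n) : x %/ w = y %/ w -> Defs.comparable lel x y -> x = y.
Proof.
move=> hp; rewrite /Defs.comparable /lel hp.
have -> : y %/ w + d <= y %/ w = false by apply/negbTE; rewrite -ltnNge; lia.
rewrite !orbF leqnn !andbT => /orP [] /eqP h; apply: val_eq => //.
Qed.

Lemma width_le : width lel <= w.
Proof.
apply/bigmax_leqP => A /forallP HA.
have -> : #|A| = size (map (fun x : 'I_n => x %% w) (enum A)).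
  by rewrite size_map cardE.
rewrite -[X in _ <= X](size_iota 0 w); apply: uniq_leq_size.
- rewrite map_inj_in_uniq ?enum_uniq // => x y; rewrite !mem_enum => xA yA hr.
  apply/eqP; apply: contraT => nxy.
  have := HA x; rewrite xA => /forallP /(_ y); rewrite yA nxy /= => nc.
  move: nc; rewrite /Defs.comparable /lel hr eqxx /=.
  rewrite negb_or => /andP [/norP [h1 _] /norP [h2 _]]; move: h1 h2; rewrite -!ltnNge; lia.
- by move=> _ /mapP [x _ ->]; rewrite mem_iota add0n ltn_pmod // w0.
Qed.

Hypothesis wn : w <= n.

Lemma width_ge : w <= width lel.
Proof.
pose A := [set widen_ord wn i | i in 'I_w].
have cA : #|A| = w.
  rewrite card_imset ?card_ord // => i j /(congr1 val) /= h; exact: ord_inj.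
have aA : is_antichain lel A.
  apply/forallP => x; apply/implyP => /imsetP [i _ ->].
  apply/forallP => y; apply/implyP => /imsetP [j _ ->].
  apply/implyP => nij; apply: incomp => /=.
  - rewrite !modn_small //; apply: contra nij => /eqP h; apply/eqP; exact: val_inj.
  - by rewrite !divn_small //; lia.
  - by rewrite !divn_small //; lia.
rewrite -{1}cA; exact: (@leq_bigmax_cond _ (fun A => is_antichain lel A) (fun A => #|A|) A aA).
Qed.


Lemma comp_sym (x y : 'I_n) : Defs.comparable lel x y = Defs.comparable lel y x.
Proof. by rewrite /Defs.comparable orbC. Qed.

Lemma half (A B : {set 'I_n}) z : #|B| = d.+1 -> is_chain lel B -> z \in A ->
  (forall x, x \in A :|: B -> z %/ w <= x %/ w) ->
  (forall b, b \in B -> ~~ Defs.comparable lel z b) -> False.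
Proof.
move=> cB /forallP chB zA zmin cr.
have : size (map (fun x : 'I_n => x %/ w) (enum B)) <= size (iota (z %/ w) d).
  apply: uniq_leq_size.
  - rewrite map_inj_in_uniq ?enum_uniq // => x y; rewrite !mem_enum => xB yB hp.
    apply: comp_samepos => //.
    by have := chB x; rewrite xB => /forallP /(_ y); rewrite yB.
  - move=> p /mapP [b]; rewrite mem_enum => bB ->; rewrite mem_iota.
    have hzb : z %/ w <= b %/ w by apply: zmin; rewrite in_setU bB orbT.
    rewrite hzb /=.
    rewrite ltnNge; apply/negP => h.
    by have := cr b bB; rewrite comp_far.
by rewrite size_map size_iota -cardE cB ltnn.
Qed.

Lemma no_kk : ~ contains_kk lel d.+1.
Proof.
move=> [A [B [cA cB chA chB cr]]].
have : 0 < #|A| by rewrite cA.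
case/card_gt0P => a0 a0A.
have a0AB : a0 \in A :|: B by rewrite in_setU a0A.
case: (arg_minnP (fun x : 'I_n => x %/ w) a0AB) => z zAB zmin.
case/setUP: zAB => [zA|zB].
- apply: (half cB chB zA zmin) => b bB; exact: cr.
- apply: (half cA chA zB) => [x|a aA]; first by rewrite setUC; apply: zmin.
  by rewrite comp_sym; apply: cr.
Qed.


Hypothesis nN : d * d * w <= n.

Definition natC a b := [seq (b + h * d) * w + (a + h) %% w | h <- iota 0 (d - b)].
Definition F j : seq 'I_n := undup (pmap insub (natC (j %% w.-1) (j %/ w.-1))).

Lemma posE P R : R < w -> (P * w + R) %/ w = P.
Proof. by move=> h; rewrite divnMDl ?w0 // divn_small // addn0. Qed.
Lemma rowE P R : R < w -> (P * w + R) %% w = R.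
Proof. by move=> h; rewrite modnMDl modn_small. Qed.

Lemma memF j (x : 'I_n) : x \in F j ->
  exists2 h, h < d - j %/ w.-1 &
    val x = (j %/ w.-1 + h * d) * w + (j %% w.-1 + h) %% w.
Proof.
rewrite mem_undup mem_pmap_sub => /mapP [h]; rewrite mem_iota add0n => hd ->.
by exists h.
Qed.

Lemma bound b h r : b + h * d < d * d -> r < w -> (b + h * d) * w + r < n.
Proof.
move=> h1 h2; apply: leq_trans nN.
have : (b + h * d).+1 * w <= d * d * w by rewrite leq_mul2r h1 orbT.
rewrite mulSn; lia.
Qed.

Lemma inF j h (hd : h < d - j %/ w.-1) (Hb : (j %/ w.-1 + h * d) * w + (j %% w.-1 + h) %% w < n) :
  Ordinal Hb \in F j.
Proof.
by rewrite mem_undup mem_pmap_sub /=; apply/mapP; exists h => //; rewrite mem_iota.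
Qed.

Lemma bh b h : h < d - b -> b + h * d < d * d.
Proof.
move=> hd.
have : (b + h.+1 * d) <= d * d.
  have : h.+1 * d <= (d - b) * d by rewrite leq_mul2r hd orbT.
  have : b <= b * d by rewrite leq_pmulr.
  rewrite mulnBl; lia.
rewrite mulSn; lia.
Qed.

Lemma w1 : 0 < w.-1. Proof. by case: w w2 => [|[|]]. Qed.

Lemma chainF j : ischain lel (F j).
Proof.
move=> x y /memF [h1 _ ex] /memF [h2 _ ey].
have px : x %/ w = j %/ w.-1 + h1 * d by rewrite ex posE // ltn_pmod // w0.
have py : y %/ w = j %/ w.-1 + h2 * d by rewrite ey posE // ltn_pmod // w0.
case: (ltngtP h1 h2) => hh.
- apply: comp_far; rewrite px py.
  have : h1.+1 * d <= h2 * d by rewrite leq_mul2r hh orbT.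
  rewrite mulSn; lia.
- rewrite comp_sym; apply: comp_far; rewrite px py.
  have : h2.+1 * d <= h1 * d by rewrite leq_mul2r hh orbT.
  rewrite mulSn; lia.
- have -> : x = y by apply: val_inj; rewrite /= ex ey hh.
  by rewrite /Defs.comparable (proj1 lel_poset).
Qed.

Lemma neF j : j < d * w.-1 -> F j != [::].
Proof.
move=> jg.
have b0 : 0 < d - j %/ w.-1 by rewrite subn_gt0 ltn_divLR ?w1 // mulnC.
have Hb := bound (bh b0) (ltn_pmod (j %% w.-1 + 0) w0).
by apply/eqP => H; have := inF b0 Hb; rewrite H.
Qed.

Lemma goodF i j : i < j -> j < d * w.-1 -> good lel [:: F i] (F j).
Proof.
move=> ij jg c'; rewrite inE => /eqP -> x /memF [h hd ex].
have bjd : j %/ w.-1 < d by rewrite ltn_divLR ?w1 // mulnC.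
have bij : i %/ w.-1 <= j %/ w.-1 by apply: leq_div2r; apply: ltnW.
have ai1 : i %% w.-1 < w.-1 by rewrite ltn_mod w1.
have aj1 : j %% w.-1 < w.-1 by rewrite ltn_mod w1.
have aiw : i %% w.-1 < w := leq_trans ai1 (leq_pred w).
have ajw : j %% w.-1 < w := leq_trans aj1 (leq_pred w).
have px : x %/ w = j %/ w.-1 + h * d by rewrite ex posE // ltn_pmod // w0.
have rx : x %% w = (j %% w.-1 + h) %% w by rewrite ex rowE // ltn_pmod // w0.
have ebb : i %% w.-1 = j %% w.-1 -> i %/ w.-1 = j %/ w.-1 -> False.
  move=> e1 e2; move: ij; rewrite (divn_eq i w.-1) (divn_eq j w.-1) e1 e2 ltnn //.
move: (inF (j:=i)) px rx hd bjd bij ai1 aj1 aiw ajw ebb.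
move: (i %/ w.-1) (j %/ w.-1) (i %% w.-1) (j %% w.-1) => bi bj ai aj inFi px rx hd bjd bij ai1 aj1 aiw ajw ebb.
clear ex.
case: (eqVneq ai aj) => ea.
- have bl : bi < bj.
    rewrite ltn_neqAle bij andbT; apply/negP => /eqP eb; exact: ebb.
  have hd' : h.+1 < d - bi by lia.
  have Hb := bound (bh hd') (ltn_pmod (ai + h.+1) w0).
  exists (Ordinal Hb); first exact: inFi.
  apply: incomp.
  + rewrite rx rowE /= ?ltn_pmod ?w0 // ea -addn1 addnA.
    rewrite -{1}[aj + h]addn0 eqn_modDl mod0n modn_small //; by case: w w2 => [|[|]].
  + rewrite px posE /= ?ltn_pmod ?w0 // mulSn; lia.
  + rewrite px posE /= ?ltn_pmod ?w0 // mulSn; lia.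
- have hd' : h < d - bi by lia.
  have Hb := bound (bh hd') (ltn_pmod (ai + h) w0).
  exists (Ordinal Hb); first exact: inFi.
  apply: incomp.
  + rewrite rx rowE /= ?ltn_pmod ?w0 //.
    by rewrite eqn_modDr !modn_small // eq_sym.
  + rewrite px posE /= ?ltn_pmod ?w0 //; lia.
  + rewrite px posE /= ?ltn_pmod ?w0 //; lia.
Qed.

End Con.

Theorem theorem6 (k w : nat) (hk : 2 <= k) (hw : 2 <= w) :
  exists (n : nat) (le : rel 'I_n),
    [/\ is_poset le,
        width le = w,
        ~ contains_kk le k &
        exists s : seq 'I_n,
          perm_eq s (enum 'I_n) /\ (k - 1) * (w - 1) <= ff_num_chains le s].
Proof.
set d := k - 1.
have d1 : 1 <= d by rewrite /d; lia.
have kd : k = d.+1 by rewrite /d; lia.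
set n := d * d * w.
have wn : w <= n by rewrite /n leq_pmull // muln_gt0 d1.
have nN : d * d * w <= n by [].
exists n, (@lel w d n); split.
- exact: (lel_poset n hw d1).
- by apply/eqP; rewrite eqn_leq (width_le n hw d1) (width_ge hw d1 wn).
- by rewrite kd; apply: (no_kk hw d1).
set g := d * w.-1.
set L := flatten (map (F w d n) (iota 0 g)).
have HL : uniq L.
  apply: flatten_uniq => [j jg|]; last exact: (goodF hw d1 wn nN).
  by split; [exact: (chainF hw d1 wn nN) | exact: undup_uniq].
exists (L ++ [seq x <- enum 'I_n | x \notin L]); split.
- apply: uniq_perm.
  + rewrite cat_uniq HL filter_uniq ?enum_uniq // andbT /=.
    by apply/hasPn => x; rewrite mem_filter => /andP [].
  + exact: enum_uniq.
  + by move=> x; rewrite mem_cat mem_filter mem_enum andbT orbN.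
- rewrite /ff_num_chains /first_fit foldl_cat.
  rewrite (ff_flatten (le := @lel w d n)).
  + apply: leq_trans (size_foldl _ _ _); rewrite size_map size_iota /g.
    by rewrite -subn1.
  + by move=> j jg; split; [exact: (chainF hw d1 wn nN) | exact: (neF hw d1 wn nN)].
  + exact: (goodF hw d1 wn nN).
Qed.
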